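(* Let $\varphi$ be an endomorphism of an abelian group $A$. Suppose that either there is a $\varphi$-invariant subgroup $A_0$ of finite index in $A$ such that the restriction of $\varphi$ to $A_0$ is inertial (resp. left-inertial), or there is a finite $\varphi$-invariant subgroup $F$ of $A$ such that the endomorphism of $A/F$ induced by $\varphi$ is inertial (resp. left-inertial). Then $\varphi$ is inertial (resp. left-inertial) on $A$.
   Context: Abelian groups are written additively. An endomorphism $\varphi$ of $A$ is inertial if $(\varphi(X)+X)/X$ is finite for every subgroup $X\le A$, and left-inertial if $X/(X\cap\varphi(X))$ is finite for every $X\le A$. *)

(* Defs.v *)
From HB Require Import structures.
From mathcomp Require Import all_boot all_algebra.
Set Implicit Arguments. Unset Strict Implicit. Unset Printing Implicit Defensive.
Import GRing.Theory.
Local Open Scope ring_scope.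

Definition is_subgroup (A : zmodType) (X : A -> Prop) : Prop :=
  X 0 /\ (forall x y, X x -> X y -> X (x - y)).

Definition finite_set (A : zmodType) (X : A -> Prop) : Prop :=
  exists s : seq A, forall x, X x <-> x \in s.

(* "Y/(Y∩X) is finite": Y is covered by finitely many cosets of X.
   When X ≤ Y this says exactly that the quotient group Y/X is finite. *)
Definition fin_mod (A : zmodType) (Y X : A -> Prop) : Prop :=
  exists s : seq A, forall y, Y y -> exists2 z, z \in s & X (y - z).

Definition img_plus (A : zmodType) (phi : A -> A) (X : A -> Prop) : A -> Prop :=
  fun y => exists x x', [/\ X x, X x' & y = phi x + x'].

Definition cap_img (A : zmodType) (phi : A -> A) (X : A -> Prop) : A -> Prop :=
  fun y => X y /\ exists x, X x /\ y = phi x.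

Definition inertial_on (A : zmodType) (D : A -> Prop) (phi : A -> A) : Prop :=
  forall X : A -> Prop, is_subgroup X -> (forall x, X x -> D x) ->
    fin_mod (img_plus phi X) X.

Definition left_inertial_on (A : zmodType) (D : A -> Prop) (phi : A -> A) : Prop :=
  forall X : A -> Prop, is_subgroup X -> (forall x, X x -> D x) ->
    fin_mod X (cap_img phi X).

Definition inertial (A : zmodType) (phi : A -> A) : Prop :=
  inertial_on (fun _ => True) phi.

Definition left_inertial (A : zmodType) (phi : A -> A) : Prop :=
  left_inertial_on (fun _ => True) phi.

Definition phi_invariant (A : zmodType) (phi : A -> A) (D : A -> Prop) : Prop :=
  forall x, D x -> D (phi x).

(* pi : A -> B is (up to isomorphism) the canonical projection A -> A/F:
   a surjective additive map with kernel exactly F. *)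
Definition is_quotient_map (A B : zmodType) (F : A -> Prop) (pi : A -> B) : Prop :=
  (forall b, exists a, pi a = b) /\ (forall a, pi a = 0 <-> F a).

Definition induced (A B : zmodType) (pi : A -> B) (phi : A -> A) (psi : B -> B) : Prop :=
  forall a, psi (pi a) = pi (phi a).

(* Main.v *)
Require Import Defs.
From HB Require Import structures.
From mathcomp Require Import all_boot all_algebra.
From Stdlib Require Import Classical.
Set Implicit Arguments. Unset Strict Implicit. Unset Printing Implicit Defensive.
Import GRing.Theory.
Local Open Scope ring_scope.

Section Aux.
Variable A : zmodType.
Variable S : A -> Prop.
Hypothesis gS : is_subgroup S.

Lemma sg0 : S 0. Proof. by case: gS. Qed.
Lemma sgB x y : S x -> S y -> S (x - y). Proof. by case: gS => _; apply. Qed.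
Lemma sgN x : S x -> S (- x).
Proof. by move=> h; rewrite -sub0r; apply: sgB => //; apply: sg0. Qed.
Lemma sgD x y : S x -> S y -> S (x + y).
Proof. by move=> hx hy; rewrite -(opprK y); apply: sgB => //; apply: sgN. Qed.
End Aux.

Lemma choose_list (T : eqType) (B : eqType) (P : B -> T -> Prop) (s : seq B) :
  exists L : seq T, forall z, z \in s -> (exists a, P z a) -> exists2 a, a \in L & P z a.
Proof.
elim: s => [|b s [L HL]]; first by exists [::].
case: (classic (exists a, P b a)) => [[a Ha]|Hn].
- exists (a :: L) => z; rewrite in_cons => /orP [/eqP -> _|zs ex].
    by exists a; rewrite ?mem_head.
  by have [a' a'L Pa'] := HL z zs ex; exists a'; rewrite // in_cons a'L orbT.
- exists L => z; rewrite in_cons => /orP [/eqP -> ex|zs ex]; first by case: Hn.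
  exact: HL.
Qed.

Lemma subrKA' (A : zmodType) (x z t : A) : (x - z) + (z - t) = x - t.
Proof. by rewrite addrA subrK. Qed.

Lemma addrKA2 (A : zmodType) (x y z : A) : (x + z) - (y + z) = x - y.
Proof. by rewrite opprD addrA addrAC addrK. Qed.

Lemma l1a (A : zmodType) (phi : {additive A -> A}) A0 :
  is_subgroup A0 -> fin_mod (fun _ => True) A0 -> inertial_on A0 phi -> inertial phi.
Proof.
move=> gA0 [s0 Hs0] Hin X gX _.
pose X0 := fun x => X x /\ A0 x.
have gX0 : is_subgroup X0.
  split; first by split; apply: sg0.
  by move=> x y [? ?] [? ?]; split; apply: sgB.
have [s1 Hs1] := Hin X0 gX0 (fun x h => proj2 h).
have [T HT] := choose_list (fun z x => X x /\ A0 (x - z)) s0.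
exists [seq z + phi t | z <- s1, t <- T].
move=> y [x [x' [Xx Xx' ->]]].
have [z zs0 Az] := Hs0 x I.
have [t tT [Xt At]] := HT z zs0 (ex_intro _ x (conj Xx Az)).
have X0x0 : X0 (x - t).
  split; first exact: sgB.
  rewrite -(subrKA' x z t) -(opprB t z); apply: sgB => //; exact: sg0.
have Hx : img_plus phi X0 (phi (x - t)).
  by exists (x - t), 0; split; rewrite ?addr0 //; apply: sg0.
have [z1 z1s H1] := Hs1 _ Hx.
exists (z1 + phi t); first exact: allpairs_f.
have -> : phi x + x' - (z1 + phi t) = (phi (x - t) - z1) + x'.
  by rewrite raddfB opprD addrAC addrA [_ - phi t - z1]addrAC.
apply: sgD => //; exact: proj1 H1.
Qed.

Lemma l1b (A : zmodType) (phi : {additive A -> A}) A0 :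
  is_subgroup A0 -> fin_mod (fun _ => True) A0 -> left_inertial_on A0 phi -> left_inertial phi.
Proof.
move=> gA0 [s0 Hs0] Hin X gX _.
pose X0 := fun x => X x /\ A0 x.
have gX0 : is_subgroup X0.
  split; first by split; apply: sg0.
  by move=> x y [? ?] [? ?]; split; apply: sgB.
have [s1 Hs1] := Hin X0 gX0 (fun x h => proj2 h).
have [T HT] := choose_list (fun z x => X x /\ A0 (x - z)) s0.
exists [seq t + z | t <- T, z <- s1].
move=> x Xx.
have [z zs0 Az] := Hs0 x I.
have [t tT [Xt At]] := HT z zs0 (ex_intro _ x (conj Xx Az)).
have X0x0 : X0 (x - t).
  split; first exact: sgB.
  rewrite -(subrKA' x z t) -(opprB t z); apply: sgB => //; exact: sg0.
have [z1 z1s [H1 [w [Xw Hw]]]] := Hs1 _ X0x0.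
exists (t + z1); first exact: allpairs_f.
have -> : x - (t + z1) = x - t - z1 by rewrite opprD addrA.
split; first exact: proj1 H1.
by exists w; split => //; exact: proj1 Xw.
Qed.

Lemma l2a (A : zmodType) (phi : {additive A -> A}) (F : A -> Prop) (B : zmodType)
  (pi : {additive A -> B}) (psi : {additive B -> B}) :
  finite_set F -> is_quotient_map F pi -> induced pi phi psi -> inertial psi ->
  inertial phi.
Proof.
move=> [sF HF] [surj ker] ind Hin X gX _.
pose Y := fun b => exists x, X x /\ pi x = b.
have gY : is_subgroup Y.
  split; first by exists 0; split; [apply: sg0 | rewrite raddf0].
  by move=> _ _ [x [Xx <-]] [y [Xy <-]]; exists (x - y); split; [apply: sgB|rewrite raddfB].
have [s1 Hs1] := Hin Y gY (fun _ _ => I).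
have [L HL] := choose_list (fun z a => pi a = z) s1.
exists [seq a + f | a <- L, f <- sF].
move=> y [x [x' [Xx Xx' ->]]].
have Hy : img_plus psi Y (pi (phi x + x')).
  exists (pi x), (pi x'); split; [by exists x | by exists x' | by rewrite raddfD ind].
have [z zs [x'' [Xx'' Hx'']]] := Hs1 _ Hy.
have [a aL Ha] := HL z zs (surj z).
have Ff : F (phi x + x' - a - x'').
  by apply/ker; rewrite !raddfB Hx'' Ha subrr.
exists (a + (phi x + x' - a - x'')).
  by apply: allpairs_f => //; apply/HF.
by rewrite opprD addrA opprB addrC subrK.
Qed.

Lemma l2b (A : zmodType) (phi : {additive A -> A}) (F : A -> Prop) (B : zmodType)
  (pi : {additive A -> B}) (psi : {additive B -> B}) :
  finite_set F -> is_quotient_map F pi -> induced pi phi psi -> left_inertial psi ->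
  left_inertial phi.
Proof.
move=> [sF HF] [surj ker] ind Hin X gX _.
pose Y := fun b => exists x, X x /\ pi x = b.
have gY : is_subgroup Y.
  split; first by exists 0; split; [apply: sg0 | rewrite raddf0].
  by move=> _ _ [x [Xx <-]] [y [Xy <-]]; exists (x - y); split; [apply: sgB|rewrite raddfB].
have [s1 Hs1] := Hin Y gY (fun _ _ => I).
have [L HL] := choose_list (fun z a => X a /\ pi a = z) s1.
have [T HT] := choose_list (fun f w => X w /\ X (phi w + f)) sF.
exists [seq a + g | a <- L, g <- [seq f + phi t | f <- sF, t <- T]].
move=> x Xx.
have Yx : Y (pi x) by exists x.
have [z zs [[x1 [Xx1 Hx1]] [_ [[w [Xw <-]] Hw]]]] := Hs1 _ Yx.
have [a aL [Xa Ha]] : exists2 a, a \in L & X a /\ pi a = z.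
  apply: HL => //; exists (x - x1); split; first exact: sgB.
  by rewrite raddfB Hx1 opprB addrC subrK.
have Ff : F (x - a - phi w).
  by apply/ker; rewrite !raddfB Ha -ind -Hw subrr.
move: Ff; set f0 := x - a - phi w => Ff.
have Ex : x = f0 + phi w + a by rewrite /f0 subrK subrK.
have Xwf : X (phi w + f0).
  rewrite addrC (_ : f0 + phi w = x - a); first exact: sgB.
  by rewrite Ex addrK.
have [t tT [Xt Xt2]] : exists2 t, t \in T & X t /\ X (phi t + f0).
  by apply: HT; [apply/HF | exists w].
exists (a + (f0 + phi t)).
  by apply: allpairs_f => //; apply: allpairs_f => //; apply/HF.
have -> : x - (a + (f0 + phi t)) = phi (w - t).
  rewrite raddfB {1}Ex [a + _]addrC addrKA2.
  by rewrite [f0 + phi w]addrC [f0 + phi t]addrC addrKA2.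
split; first by rewrite raddfB -(addrKA2 _ _ f0); apply: sgB.
by exists (w - t); split => //; apply: sgB.
Qed.

Theorem proposition2p3 (A : zmodType) (phi : {additive A -> A}) :
  ((exists A0 : A -> Prop,
       [/\ is_subgroup A0, phi_invariant phi A0,
           fin_mod (fun _ => True) A0 & inertial_on A0 phi])
   \/ (exists F : A -> Prop,
       [/\ is_subgroup F, finite_set F, phi_invariant phi F &
         exists (B : zmodType) (pi : {additive A -> B}) (psi : {additive B -> B}),
           [/\ is_quotient_map F pi, induced pi phi psi & inertial psi]])
   -> inertial phi)
  /\
  ((exists A0 : A -> Prop,
       [/\ is_subgroup A0, phi_invariant phi A0,
           fin_mod (fun _ => True) A0 & left_inertial_on A0 phi])
   \/ (exists F : A -> Prop,
       [/\ is_subgroup F, finite_set F, phi_invariant phi F &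
         exists (B : zmodType) (pi : {additive A -> B}) (psi : {additive B -> B}),
           [/\ is_quotient_map F pi, induced pi phi psi & left_inertial psi]])
   -> left_inertial phi).
Proof.
split.
- case=> [[A0 [g _ f h]]|[F [_ fF _ [B [pi [psi [q i h]]]]]]].
    exact: (l1a g f h).
  exact: (l2a fF q i h).
- case=> [[A0 [g _ f h]]|[F [_ fF _ [B [pi [psi [q i h]]]]]]].
    exact: (l1b g f h).
  exact: (l2b fF q i h).
Qed.
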